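(* Let $A$ be a differential ring, $X=\operatorname{Spec}^\Delta A$, and let $D$ be a differential subring of $\mathcal O'(X)$ containing $\iota'(A)$. Let $\iota'\colon A\to D$ denote the corresponding homomorphism. Then $\iota'^*\colon\operatorname{Spec}^\Delta D\to\operatorname{Spec}^\Delta A$, $\mathfrak q\mapsto\iota'^{-1}(\mathfrak q)$, is a homeomorphism.
   Context: All rings are commutative with unit. A differential ring is a ring with finitely many pairwise commuting derivations. $\operatorname{Spec}^\Delta R$ is the set of prime ideals of a differential ring $R$ closed under all derivations, with the Kolchin topology (closed sets $V(E)=\{\mathfrak p: E\subseteq\mathfrak p\}$). For $\mathfrak p\in X$, $K(\mathfrak p)$ is the fraction field of $A/\mathfrak p$ with the induced derivations. For an open $U\subseteq X$, $\mathcal O'(U)$ is the set of functions $f$ on $U$ with $f(\mathfrak p)\in K(\mathfrak p)$ that are regular at every point of $U$, where $f$ is regular at $\mathfrak p$ if there exist an open neighborhood $W\subseteq U$ of $\mathfrak p$ and $a,b\in A$ with $b\notin\mathfrak q$ and $f(\mathfrak q)=a/b$ in $K(\mathfrak q)$ for all $\mathfrak q\in W$. With pointwise operations and pointwise derivations, $\mathcal O'(U)$ is a differential ring. The differential homomorphism $\iota'\colon A\to\mathcal O'(X)$ sends $a$ to the function $\mathfrak p\mapsto (a\bmod\mathfrak p)\in K(\mathfrak p)$. *)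

(* Defs.v *)
From HB Require Import structures.
From mathcomp Require Import all_boot all_order all_algebra.
Set Implicit Arguments. Unset Strict Implicit. Unset Printing Implicit Defensive.
Import GRing.Theory.
Local Open Scope ring_scope.

Definition is_derivation (A : comPzRingType) (D : A -> A) : Prop :=
  (forall a b, D (a + b) = D a + D b) /\ (forall a b, D (a * b) = D a * b + a * D b).

Definition diff_ring_structure (A : comPzRingType) (n : nat) (d : 'I_n -> A -> A) : Prop :=
  (forall i, is_derivation (d i)) /\ (forall i j a, d i (d j (a)) = d j (d i a)).

Section DiffSpec.
Variables (A : comPzRingType) (n : nat) (d : 'I_n -> A -> A).

Definition diff_prime (p : A -> Prop) : Prop :=
  ((p 0) /\ ((forall a b, p a -> p b -> p (a + b))) /\ ((forall a, p a -> p (- a))) /\ ((forall r a, p a -> p (r * a))) /\ (~ p 1) /\ ((forall a b, p (a * b) -> p a \/ p b)) /\ ((forall i a, p a -> p (d i a)))).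

Record point := Point { pt : A -> Prop; ptP : diff_prime pt }.

(* Elements of K(p) = Frac(A/p) are represented by their equivalence class:
   a predicate c on pairs (a, b), meaning "a/b represents the element",
   where b is not in p and (a,b) ~ (a',b') iff a b' - a' b \in p. *)
Definition Kclass (p : A -> Prop) (c : A -> A -> Prop) : Prop :=
  exists a0 b0, ~ p b0 /\ forall a b, c a b <-> (~ p b /\ p (a * b0 - a0 * b)).

(* The element a/b of K(p) (meaningful when b is not in p). *)
Definition Kfrac (p : A -> Prop) (a0 b0 : A) : A -> A -> Prop :=
  fun a b => ~ p b /\ p (a * b0 - a0 * b).

Definition Kadd p (c1 c2 : A -> A -> Prop) : A -> A -> Prop :=
  fun x y => exists a1 b1 a2 b2, c1 a1 b1 /\ c2 a2 b2 /\
     Kfrac p (a1 * b2 + a2 * b1) (b1 * b2) x y.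
Definition Kmul p (c1 c2 : A -> A -> Prop) : A -> A -> Prop :=
  fun x y => exists a1 b1 a2 b2, c1 a1 b1 /\ c2 a2 b2 /\
     Kfrac p (a1 * a2) (b1 * b2) x y.
Definition Kopp p (c : A -> A -> Prop) : A -> A -> Prop :=
  fun x y => exists a b, c a b /\ Kfrac p (- a) b x y.
Definition Kder p (i : 'I_n) (c : A -> A -> Prop) : A -> A -> Prop :=
  fun x y => exists a b, c a b /\ Kfrac p (d i a * b - a * d i b) (b * b) x y.

(* Functions f on X with f(p) \in K(p). *)
Definition sec := point -> A -> A -> Prop.

Definition szero : sec := fun p => Kfrac (pt p) 0 1.
Definition sone : sec := fun p => Kfrac (pt p) 1 1.
Definition sadd (f g : sec) : sec := fun p => Kadd (pt p) (f p) (g p).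
Definition smul (f g : sec) : sec := fun p => Kmul (pt p) (f p) (g p).
Definition sopp (f : sec) : sec := fun p => Kopp (pt p) (f p).
Definition sder (i : 'I_n) (f : sec) : sec := fun p => Kder (pt p) i (f p).

Definition iota' (a : A) : sec := fun p => Kfrac (pt p) a 1.

Definition openX (W : point -> Prop) : Prop :=
  exists E : A -> Prop, forall q, W q <-> ~ (forall a, E a -> pt q a).

Definition regular_at (f : sec) (p : point) : Prop :=
  exists (W : point -> Prop) (a b : A), openX W /\ W p /\
    forall q, W q -> ~ pt q b /\ (forall x y, f q x y <-> Kfrac (pt q) a b x y).

Definition Oprime (f : sec) : Prop :=
  (forall p, Kclass (pt p) (f p)) /\ (forall p, regular_at f p).

Definition diff_subring_containing_iota (D : sec -> Prop) : Prop :=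
  (((forall f, D f -> Oprime f)) /\ (D szero) /\ (D sone) /\ ((forall f g, D f -> D g -> D (sadd f g))) /\ ((forall f, D f -> D (sopp f))) /\ ((forall f g, D f -> D g -> D (smul f g))) /\ ((forall i f, D f -> D (sder i f))) /\ ((forall a, D (iota' a)))).

Definition diff_prime_D (D : sec -> Prop) (Q : sec -> Prop) : Prop :=
  (((forall f, Q f -> D f)) /\ (Q szero) /\ ((forall f g, Q f -> Q g -> Q (sadd f g))) /\ ((forall f, Q f -> Q (sopp f))) /\ ((forall r f, D r -> Q f -> Q (smul r f))) /\ (~ Q sone) /\ ((forall f g, D f -> D g -> Q (smul f g) -> Q f \/ Q g)) /\ ((forall i f, Q f -> Q (sder i f)))).

Definition comap (Q : sec -> Prop) : A -> Prop := fun a => Q (iota' a).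

(* Kolchin-closed subsets of Spec^Delta A and Spec^Delta D (points are ideals,
   i.e. predicates; a subset C is closed iff it agrees with some V(E) on Spec). *)
Definition closedA (C : (A -> Prop) -> Prop) : Prop :=
  exists E : A -> Prop, forall p, diff_prime p -> (C p <-> forall a, E a -> p a).
Definition closedD (D : sec -> Prop) (C : (sec -> Prop) -> Prop) : Prop :=
  exists E : sec -> Prop, forall Q, diff_prime_D D Q -> (C Q <-> forall f, E f -> Q f).

End DiffSpec.

(* phi : XS -> XT is a homeomorphism (XS, XT subsets of S, T with the given
   closed sets): well defined, bijective, continuous and closed. *)
Definition homeomorphism {S T : Type} (XS : S -> Prop) (XT : T -> Prop)
  (closedS : (S -> Prop) -> Prop) (closedT : (T -> Prop) -> Prop) (phi : S -> T) : Prop :=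
  (((forall s, XS s -> XT (phi s))) /\ ((forall s1 s2, XS s1 -> XS s2 -> phi s1 = phi s2 -> s1 = s2)) /\ ((forall t, XT t -> exists s, XS s /\ phi s = t)) /\ ((forall C, closedT C -> closedS (fun s => C (phi s)))) /\ ((forall C, closedS C -> closedT (fun t => exists s, XS s /\ C s /\ phi s = t)))).

(* Main.v *)
Require Import Defs.
From HB Require Import structures.
From mathcomp Require Import all_boot all_order all_algebra.
From Stdlib Require Import Ring Classical FunctionalExtensionality PropExtensionality ProofIrrelevance.
Set Implicit Arguments. Unset Strict Implicit. Unset Printing Implicit Defensive.

Section Gen.
Variables (R : Type) (z o : R) (ad mu su : R -> R -> R) (op : R -> R).
Hypothesis rt : ring_theory z o ad mu su op eq.
Add Ring Rr : rt.
Local Notation "x + y" := (ad x y).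
Local Notation "x * y" := (mu x y).
Local Notation "- x" := (op x).
Local Notation "x - y" := (ad x (op y)).
Lemma g_trans1 b b' x y a a' : b*(x*b' - a'*y) = b'*(x*b - a*y) + y*(a*b' - a'*b).
Proof. ring. Qed.
Lemma g_trans2 b b' x y a a' : b'*(x*b - a*y) = b*(x*b' - a'*y) - y*(a*b' - a'*b).
Proof. ring. Qed.
Lemma g_add a1 a2 b1 b2 a1' a2' b1' b2' : (a1'*b2'+a2'*b1')*(b1*b2) - (a1*b2+a2*b1)*(b1'*b2') = (b2*b2')*(a1'*b1 - a1*b1') + (b1*b1')*(a2'*b2 - a2*b2').
Proof. ring. Qed.
Lemma g_mul a1 a2 b1 b2 a1' a2' b1' b2' : (a1'*a2')*(b1*b2) - (a1*a2)*(b1'*b2') = (a2'*b2)*(a1'*b1 - a1*b1') + (a1*b1')*(a2'*b2 - a2*b2').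
Proof. ring. Qed.
Lemma g_opp a b a' b' : (-a')*b - (-a)*b' = -(a'*b - a*b').
Proof. ring. Qed.
Lemma g_der a b a' b' da db da' db' : (da'*b' - a'*db')*(b*b) - (da*b - a*db)*(b'*b') = (b*b')*((da'*b + a'*db) - (da*b' + a*db')) - (b*db' + b'*db)*(a'*b - a*b').
Proof. ring. Qed.
Lemma g_E b x y a : (b*x*(o*y*o) + -(b*x*o + -a*(o*y))*(o*y))*o - a*(o*y*(o*y*o)) = z.
Proof. ring. Qed.
Lemma g_E2 b x y a : ((b*x*o + -a*(o*y))*o + a*(o*y*o))*(o*y) - b*x*(o*y*o*o) = z.
Proof. ring. Qed.
End Gen.

Import GRing.Theory.
Local Open Scope ring_scope.

Lemma A_rt (A : comPzRingType) : @ring_theory A 0 1 +%R *%R (fun x y => x - y) -%R eq.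
Proof. constructor; intros; rewrite ?add0r ?mul1r ?mulrDl ?subrr //; try (by rewrite addrC); by rewrite ?addrA ?mulrA ?(mulrC x y). Qed.

Section Main.
Variables (A : comPzRingType) (n : nat) (d : 'I_n -> A -> A).
Hypothesis hd : diff_ring_structure d.

Lemma derD i a b : d i (a + b) = d i a + d i b. Proof. by case: hd => H _; case: (H i) => H1 _; apply: H1. Qed.
Lemma derM i a b : d i (a * b) = d i a * b + a * d i b. Proof. by case: hd => H _; case: (H i) => _ H1; apply: H1. Qed.
Lemma der0 i : d i 0 = 0.
Proof. have H := derD i 0 0; rewrite addr0 in H; rewrite -{1}[d i 0]addr0 in H; exact: esym (addrI _ H). Qed.
Lemma der1 i : d i 1 = 0.
Proof. have H := derM i 1 1; rewrite !mulr1 !mul1r -{1}[d i 1]addr0 in H; exact: esym (addrI _ H). Qed.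
Lemma derN i a : d i (- a) = - d i a.
Proof. apply/esym/addr0_eq; rewrite -derD subrr; exact: der0. Qed.
Lemma derB i a b : d i (a - b) = d i a - d i b.
Proof. by rewrite derD derN. Qed.

Section Ideal.
Variable p : A -> Prop.
Hypothesis hp : diff_prime d p.
Lemma pI0 : p 0. Proof. by case: hp. Qed.
Lemma pD a b : p a -> p b -> p (a + b). Proof. by case: hp => _ [H _]; apply: H. Qed.
Lemma pN a : p a -> p (- a). Proof. by case: hp => _ [_ [H _]]; apply: H. Qed.
Lemma pM r a : p a -> p (r * a). Proof. by case: hp => _ [_ [_ [H _]]]; apply: H. Qed.
Lemma pMr r a : p a -> p (a * r). Proof. by rewrite mulrC; apply: pM. Qed.
Lemma p1 : ~ p 1. Proof. by case: hp => _ [_ [_ [_ [H _]]]]. Qed.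
Lemma pP a b : p (a * b) -> p a \/ p b. Proof. by case: hp => _ [_ [_ [_ [_ [H _]]]]]; apply: H. Qed.
Lemma pd i a : p a -> p (d i a). Proof. by case: hp => _ [_ [_ [_ [_ [_ H]]]]]; apply: H. Qed.
Lemma pB a b : p a -> p b -> p (a - b). Proof. by move=> Ha Hb; apply: pD => //; apply: pN. Qed.
Lemma pNN a : p (- a) -> p a. Proof. by move/pN; rewrite opprK. Qed.
Lemma nzM a b : ~ p a -> ~ p b -> ~ p (a * b). Proof. by move=> Ha Hb /pP [] . Qed.

Lemma Kfrac_eq a b a' b' : ~ p b -> ~ p b' -> p (a * b' - a' * b) -> Kfrac p a b = Kfrac p a' b'.
Proof.
move=> Hb Hb' Hab; apply: functional_extensionality => x; apply: functional_extensionality => y.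
apply: propositional_extensionality; rewrite /Kfrac; split=> -[Hy H]; split => //.
- have : p (b * (x * b' - a' * y)).
    rewrite (g_trans1 (A_rt A) b b' x y a a'); apply: pD; apply: pM => //.
  by case/pP.
- have : p (b' * (x * b - a * y)).
    rewrite (g_trans2 (A_rt A) b b' x y a a'); apply: pB; apply: pM => //.
  by case/pP.
Qed.

Lemma Kfrac_eq' a b a' b' : ~ p b -> ~ p b' -> a * b' - a' * b = 0 -> Kfrac p a b = Kfrac p a' b'.
Proof. by move=> Hb Hb' E; apply: Kfrac_eq => //; rewrite E; apply: pI0. Qed.

Lemma Kfrac_refl a b : ~ p b -> Kfrac p a b a b.
Proof. by move=> Hb; split => //; rewrite subrr; apply: pI0. Qed.

Lemma Kfrac0 a b : ~ p b -> (Kfrac p a b 0 1 <-> p a).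
Proof.
move=> Hb; rewrite /Kfrac mul0r mulr1 sub0r; split => [[_ H]|H]; first exact: pNN.
by split; [apply: p1 | apply: pN].
Qed.

Lemma Kfrac_zero a b : ~ p b -> p a -> Kfrac p a b = Kfrac p 0 1.
Proof. by move=> Hb Ha; apply: Kfrac_eq => //; [apply: p1 | rewrite mulr1 mul0r subr0]. Qed.

Lemma Kclass_frac c : Kclass p c -> exists a b, ~ p b /\ c = Kfrac p a b.
Proof.
move=> [a [b [Hb H]]]; exists a, b; split => //.
apply: functional_extensionality => x; apply: functional_extensionality => y.
by apply: propositional_extensionality; apply: H.
Qed.

Lemma Kadd_frac a1 b1 a2 b2 : ~ p b1 -> ~ p b2 ->
  Kadd p (Kfrac p a1 b1) (Kfrac p a2 b2) = Kfrac p (a1 * b2 + a2 * b1) (b1 * b2).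
Proof.
move=> Hb1 Hb2; apply: functional_extensionality => x; apply: functional_extensionality => y.
apply: propositional_extensionality; split.
- move=> [a1' [b1' [a2' [b2' [[Hb1' Hu1] [[Hb2' Hu2] H3]]]]]].
  rewrite (@Kfrac_eq _ _ (a1 * b2 + a2 * b1) (b1 * b2)) in H3 => //; try by apply: nzM.
  rewrite (g_add (A_rt A) a1 a2 b1 b2); apply: pD; apply: pM => //.
- move=> H; exists a1, b1, a2, b2; split; first exact: Kfrac_refl.
  by split; first exact: Kfrac_refl.
Qed.

Lemma Kmul_frac a1 b1 a2 b2 : ~ p b1 -> ~ p b2 ->
  Kmul p (Kfrac p a1 b1) (Kfrac p a2 b2) = Kfrac p (a1 * a2) (b1 * b2).
Proof.
move=> Hb1 Hb2; apply: functional_extensionality => x; apply: functional_extensionality => y.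
apply: propositional_extensionality; split.
- move=> [a1' [b1' [a2' [b2' [[Hb1' Hu1] [[Hb2' Hu2] H3]]]]]].
  rewrite (@Kfrac_eq _ _ (a1 * a2) (b1 * b2)) in H3 => //; try by apply: nzM.
  rewrite (g_mul (A_rt A) a1 a2 b1 b2); apply: pD; apply: pM => //.
- move=> H; exists a1, b1, a2, b2; split; first exact: Kfrac_refl.
  by split; first exact: Kfrac_refl.
Qed.

Lemma Kopp_frac a b : ~ p b -> Kopp p (Kfrac p a b) = Kfrac p (- a) b.
Proof.
move=> Hb; apply: functional_extensionality => x; apply: functional_extensionality => y.
apply: propositional_extensionality; split.
- move=> [a' [b' [[Hb' Hu] H3]]].
  rewrite (@Kfrac_eq _ _ (- a) b) in H3 => //.
  by rewrite (g_opp (A_rt A)); apply: pN.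
- by move=> H; exists a, b; split; first exact: Kfrac_refl.
Qed.

Lemma Kder_frac i a b : ~ p b ->
  Kder d p i (Kfrac p a b) = Kfrac p (d i a * b - a * d i b) (b * b).
Proof.
move=> Hb; apply: functional_extensionality => x; apply: functional_extensionality => y.
apply: propositional_extensionality; split.
- move=> [a' [b' [[Hb' Hu] H3]]].
  rewrite (@Kfrac_eq _ _ (d i a * b - a * d i b) (b * b)) in H3 => //; try by apply: nzM.
  rewrite (g_der (A_rt A)); apply: pB; apply: pM => //.
  by have := pd i Hu; rewrite derB !derM.
- by move=> H; exists a, b; split; first exact: Kfrac_refl.
Qed.

End Ideal.
Section Sec.
Variable D : sec d -> Prop.
Hypothesis hD : diff_subring_containing_iota D.
Local Notation io := (@iota' A n d).
Local Notation pointd := (@point A n d).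

Lemma nq1 (q : pointd) : ~ pt q 1. Proof. exact: p1 (ptP q). Qed.

Lemma iotaD a b : io (a + b) = sadd (io a) (io b).
Proof. apply: functional_extensionality => q; rewrite /sadd /iota' (Kadd_frac (ptP q)) ?mulr1 //; exact: nq1. Qed.
Lemma iotaM a b : io (a * b) = smul (io a) (io b).
Proof. apply: functional_extensionality => q; rewrite /smul /iota' (Kmul_frac (ptP q)) ?mulr1 //; exact: nq1. Qed.
Lemma iotaN a : io (- a) = sopp (io a).
Proof. apply: functional_extensionality => q; rewrite /sopp /iota' (Kopp_frac (ptP q)) //; exact: nq1. Qed.
Lemma iotaDer i a : io (d i a) = sder i (io a).
Proof. apply: functional_extensionality => q; rewrite /sder /iota' (Kder_frac (ptP q)) ?der1 ?mulr0 ?subr0 ?mulr1 //; exact: nq1. Qed.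

Lemma comap_prime Q : diff_prime_D D Q -> diff_prime d (comap Q).
Proof.
move=> [QD [Q0 [QA [QN [QM [Q1 [QP Qd]]]]]]].
have [DO [D0 [D1 [DA [DN [DM [Dd Di]]]]]]] := hD.
rewrite /comap; split; first exact: Q0.
split; first by move=> a b Ha Hb; rewrite iotaD; apply: QA.
split; first by move=> a Ha; rewrite iotaN; apply: QN.
split; first by move=> r a Ha; rewrite iotaM; apply: QM.
split; first exact: Q1.
split; first by move=> a b; rewrite iotaM; apply: QP.
by move=> i a Ha; rewrite iotaDer; apply: Qd.
Qed.

Definition mP (P : pointd) : sec d -> Prop := fun f => D f /\ f P 0 1.

Lemma classP (f : sec d) (q : pointd) : D f -> exists a b, ~ pt q b /\ f q = Kfrac (pt q) a b.
Proof. move=> Df; have [DO _] := hD; exact: Kclass_frac ((DO f Df).1 q). Qed.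

Lemma mP_prime P : diff_prime_D D (mP P).
Proof.
have [DO [D0 [D1 [DA [DN [DM [Dd Di]]]]]]] := hD.
have hp := ptP P.
split; first by move=> f [].
split; first by split => //; apply/(Kfrac0 hp) => //; [exact: p1 | exact: pI0].
split.
  move=> f g [Df Hf] [Dg Hg]; split; first exact: DA.
  have [a1 [b1 [Hb1 E1]]] := classP P Df; have [a2 [b2 [Hb2 E2]]] := classP P Dg.
  rewrite E1 (Kfrac0 hp) // in Hf; rewrite E2 (Kfrac0 hp) // in Hg.
  rewrite /sadd E1 E2 (Kadd_frac hp) // (Kfrac0 hp); last exact: nzM.
  by apply: (pD hp); apply: (pMr hp).
split.
  move=> f [Df Hf]; split; first exact: DN.
  have [a1 [b1 [Hb1 E1]]] := classP P Df.
  rewrite E1 (Kfrac0 hp) // in Hf.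
  by rewrite /sopp E1 (Kopp_frac hp) // (Kfrac0 hp) //; apply: (pN hp).
split.
  move=> r f Dr [Df Hf]; split; first exact: DM.
  have [a1 [b1 [Hb1 E1]]] := classP P Dr; have [a2 [b2 [Hb2 E2]]] := classP P Df.
  rewrite E2 (Kfrac0 hp) // in Hf.
  rewrite /smul E1 E2 (Kmul_frac hp) // (Kfrac0 hp); last exact: nzM.
  by apply: (pM hp).
split.
  move=> [_ H]; rewrite /sone (Kfrac0 hp) in H; [exact: (p1 hp) | exact: p1].
split.
  move=> f g Df Dg [_ H].
  have [a1 [b1 [Hb1 E1]]] := classP P Df; have [a2 [b2 [Hb2 E2]]] := classP P Dg.
  rewrite /smul E1 E2 (Kmul_frac hp) // (Kfrac0 hp) in H; last exact: nzM.
  case: (pP hp H) => Ha; [left | right]; split => //.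
    by rewrite E1 (Kfrac0 hp).
  by rewrite E2 (Kfrac0 hp).
move=> i f [Df Hf]; split; first exact: Dd.
have [a1 [b1 [Hb1 E1]]] := classP P Df.
rewrite E1 (Kfrac0 hp) // in Hf.
rewrite /sder E1 (Kder_frac hp) // (Kfrac0 hp); last exact: nzM.
by apply: (pB hp); apply: (pMr hp) => //; apply: (pd hp).
Qed.

Lemma comap_mP (P : pointd) : comap (mP P) = pt P.
Proof.
have [DO [D0 [D1 [DA [DN [DM [Dd Di]]]]]]] := hD.
apply: functional_extensionality => a; apply: propositional_extensionality.
rewrite /comap /mP /iota' (Kfrac0 (ptP P)); last exact: nq1.
split => [[]|H] //; split => //; apply: Di.
Qed.

Lemma chart (P : pointd) f : D f -> exists e a b, ~ pt P e /\
  forall q : pointd, ~ pt q e -> ~ pt q b /\ f q = Kfrac (pt q) a b.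
Proof.
move=> Df; have [DO _] := hD.
have [_ /(_ P) [W [a [b [[E HE] [WP HW]]]]]] := DO f Df.
have [e He] : exists e, ~ (E e -> pt P e).
  apply: not_all_ex_not => H; exact: ((HE P).1 WP H).
have [Ee Pe] := imply_to_and _ _ He.
exists e, a, b; split => // q qe.
have Wq : W q by apply/(HE q) => H; exact: qe (H e Ee).
have [qb Hq] := HW q Wq; split => //.
apply: functional_extensionality => x; apply: functional_extensionality => y.
by apply: propositional_extensionality; apply: Hq.
Qed.

Lemma key Q (hQ : diff_prime_D D Q) (hp : diff_prime d (comap Q)) f :
  Q f <-> mP (Point hp) f.
Proof.
have [QD [Q0 [QA [QN [QM [Q1 [QP Qd]]]]]]] := hQ.
have [DO [D0 [D1 [DA [DN [DM [Dd Di]]]]]]] := hD.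
suff H : D f -> (Q f <-> f (Point hp) 0 1).
  rewrite /mP; split => [Qf|[Df Hf]]; last by apply/H.
  by split; [exact: QD | apply/H => //; exact: QD].
move=> Df.
have [e [a [b [He Hch]]]] := chart (Point hp) Df.
have [Hb HfP] := Hch _ He.
set h := sadd (smul (io b) f) (sopp (io a)).
have Dh : D h by apply: DA; [apply: DM | apply: DN].
have Hz : smul (io e) h = @szero A n d.
  apply: functional_extensionality => q.
  have [x [y [Hy Hfq]]] := classP q Df.
  have hq := ptP q; have q1 := @nq1 q.
  rewrite /h /smul /sadd /sopp /iota' /szero Hfq.
  rewrite !(Kmul_frac hq) // ?(Kopp_frac hq) // ?(Kadd_frac hq) // ?(Kmul_frac hq) //; try by repeat apply: (nzM hq).
  rewrite !mulr1 !mul1r.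
  case: (classic (pt q e)) => qe.
    by apply: (Kfrac_zero hq) => //; apply: (pMr hq).
  have [qb Ef] := Hch q qe.
  have := Kfrac_refl hq x Hy; rewrite -Hfq Ef => -[_ Hxb].
  by apply: (Kfrac_zero hq) => //; apply: (pM hq); rewrite mulNr (mulrC b x).
have Qh : Q h.
  have Qz : Q (smul (io e) h) by rewrite Hz.
  by case: (QP _ _ (Di e) Dh Qz) => // Qe; exfalso; exact: He Qe.
split.
- move=> Qf.
  have Qbf : Q (smul (io b) f) by apply: QM.
  have E : sadd (smul (io b) f) (sopp h) = io a.
    apply: functional_extensionality => q.
    have [x [y [Hy Hfq]]] := classP q Df.
    have hq := ptP q; have q1 := @nq1 q.
    rewrite /h /smul /sadd /sopp /iota' Hfq.
    rewrite !(Kmul_frac hq) // ?(Kopp_frac hq) // ?(Kadd_frac hq) // ?(Kopp_frac hq) // ?(Kadd_frac hq) //; try by repeat apply: (nzM hq).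
    apply: (Kfrac_eq' hq) => //; try by repeat apply: (nzM hq).
    exact: (g_E (A_rt A)).
  have Qa : Q (io a) by rewrite -E; apply: QA => //; apply: QN.
  by rewrite HfP; apply/(Kfrac0 hp).
- move=> Hf; rewrite HfP in Hf; have pa := (Kfrac0 hp _ Hb).1 Hf.
  have E2 : sadd h (io a) = smul (io b) f.
    apply: functional_extensionality => q.
    have [x [y [Hy Hfq]]] := classP q Df.
    have hq := ptP q; have q1 := @nq1 q.
    rewrite /h /smul /sadd /sopp /iota' Hfq.
    rewrite !(Kmul_frac hq) // ?(Kopp_frac hq) // ?(Kadd_frac hq) // ?(Kadd_frac hq) //; try by repeat apply: (nzM hq).
    apply: (Kfrac_eq' hq) => //; try by repeat apply: (nzM hq).
    exact: (g_E2 (A_rt A)).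
  have Qbf : Q (smul (io b) f) by rewrite -E2; apply: QA.
  by case: (QP _ _ (Di b) Df Qbf) => // Qb; exfalso; exact: Hb Qb.
Qed.

Definition Zf (f : sec d) (c : A) : Prop := exists e a b, c = e * a /\
  forall q : pointd, ~ pt q e -> ~ pt q b /\ f q = Kfrac (pt q) a b.

Lemma Zf_iff (P : pointd) f : D f -> (f P 0 1 <-> forall c, Zf f c -> pt P c).
Proof.
move=> Df; have hp := ptP P; split.
- move=> H c [e [a [b [-> Hc]]]].
  case: (classic (pt P e)) => Pe; first exact: (pMr hp).
  have [Pb E] := Hc P Pe; rewrite E (Kfrac0 hp) // in H; exact: (pM hp).
- move=> H; have [e [a [b [He Hch]]]] := chart P Df.
  have [Pb E] := Hch P He.
  have : pt P (e * a) by apply: H; exists e, a, b.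
  case/(pP hp) => // Pa.
  by rewrite E (Kfrac0 hp).
Qed.

Lemma Point_eq (p1 p2 : A -> Prop) (h1 : diff_prime d p1) (h2 : diff_prime d p2) :
  p1 = p2 -> Point h1 = Point h2.
Proof. by move=> E; subst; rewrite (proof_irrelevance _ h1 h2). Qed.

Lemma main : homeomorphism (diff_prime_D D) (diff_prime d) (closedD D) (closedA d) (@comap A n d).
Proof.
split; first exact: comap_prime.
split.
  move=> s1 s2 h1 h2 E.
  apply: functional_extensionality => f; apply: propositional_extensionality.
  rewrite (key h1 (comap_prime h1)) (key h2 (comap_prime h2)).
  by rewrite (Point_eq (comap_prime h1) (comap_prime h2) E).
split.
  move=> p hp; exists (mP (Point hp)); split; first exact: mP_prime.
  exact: comap_mP.
split.
  move=> C [E HE]; exists (fun f => exists a, E a /\ f = io a) => Q hQ.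
  rewrite (HE _ (comap_prime hQ)); split.
  - by move=> H f [a [Ea ->]]; apply: H.
  - by move=> H a Ea; apply: H; exists a.
move=> C [E HE].
exists (fun c => (exists f, E f /\ ~ D f) \/ (exists f, E f /\ D f /\ Zf f c)) => p hp.
split.
- move=> [s [hs [Cs <-]]] c [[f [Ef nDf]] | [f [Ef [Df Zc]]]].
  + exfalso; apply: nDf; have [QD _] := hs; apply: QD; exact: ((HE s hs).1 Cs f Ef).
  + have Qf := (HE s hs).1 Cs f Ef.
    have [_ Hf] := (key hs (comap_prime hs) f).1 Qf.
    exact: ((Zf_iff _ Df).1 Hf c Zc).
- move=> H; exists (mP (Point hp)); split; first exact: mP_prime.
  split; last exact: comap_mP.
  apply: (HE _ (mP_prime _)).2 => f Ef.
  case: (classic (D f)) => Df.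
    split => //; apply/(Zf_iff (Point hp) Df) => c Zc; by apply H; right; exists f.
  by exfalso; apply: (p1 hp); apply H; left; exists f.
Qed.

End Sec.
End Main.

Theorem theorem2p6 (A : comPzRingType) (n : nat) (d : 'I_n -> A -> A)
  (hd : diff_ring_structure d) (D : sec d -> Prop)
  (hD : diff_subring_containing_iota D) :
  homeomorphism (diff_prime_D D) (diff_prime d) (closedD D) (closedA d) (@comap A n d).
Proof. exact: (main hd hD). Qed.
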